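(* For all integers $k,f,n$ with $1\le k\le f-1$ and $f\le n-1$, $\mathrm{Cons}(n,f)$ is not ${}^cC$-reducible to $k\text{-TAg}(n,f)$ (in particular, it is not $C$-reducible to $k\text{-TAg}(n,f)$).
   Context: Model: a finite set of processes runs an asynchronous algorithm communicating by reliable message passing with unbounded delays and speeds; processes fail only by crashing. Time is $\mathcal T=\mathbb N$; a failure pattern $F$ for $\Pi$ is a nondecreasing map $\mathcal T\to2^\Pi$, $Faulty(F)=\bigcup_tF(t)$. A binary agreement problem $P$ for $\Pi$ maps each $(F,\vec V)$, $\vec V\in\{0,1\}^\Pi$, to a nonempty $P(F,\vec V)\subseteq\{0,1\}$; a task is $T=(P,f)$. An algorithm solves $T$ if in every run with $|Faulty(F)|\le f$ and initial values $\vec V$: every correct process eventually decides, decisions are irrevocable, no two processes decide differently, and decisions lie in $P(F,\vec V)$. $k\text{-TAg}_\Pi(F,\vec V)=\{0\}$ if at least $k$ entries of $\vec V$ are $0$; $=\{1\}$ if $\vec V$ is all-ones and $|Faulty(F)|\le k-1$; $=\{0,1\}$ otherwise; $k\text{-TAg}(\Pi,f)=(k\text{-TAg}_\Pi,f)$; $k\text{-TAg}(n,f)$ and $\mathrm{Cons}(n,f)=n\text{-TAg}(n,f)$ are the versions for $\Pi=\{1,\dots,n\}$. Oracles: for $T=(P,f)$ on $\Pi$, an $f$-resilient oracle suitable for $P$ is a black box with consultants $\Pi$ whose history is a sequence of successive consultations, in each of which every consultant may submit at most one query in $\{0,1\}$ and the oracle returns a common response $d$ with $d\in P(F,\vec V)$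 for every $\vec V$ extending the partial query vector (the oracle may use the whole failure pattern, including future crashes), and every correct querier gets the response whenever at least $|\Pi|-f$ consultants query; $\mathcal O.T$ is the most general such oracle. It is consistent if, in every history, for any two consultations with query vectors $\vec W_1\supseteq\vec W_2$, answering $d$ on $\vec W_2$ implies answering $d$ on $\vec W_1$; ${}^c\mathcal O.T$ is the most general consistent one. $T_1\le_C T_2$ (resp. $T_1\le_{{}^cC}T_2$) means there is an algorithm solving $T_1$ whose processes may additionally consult the oracle $\mathcal O.T_2$ (resp. ${}^c\mathcal O.T_2$); $C$-reducibility implies ${}^cC$-reducibility. *)

(* Defs.v *)
From mathcomp Require Import all_boot.
From mathcomp Require Import boolp.

Set Implicit Arguments.
Unset Strict Implicit.
Unset Printing Implicit Defensive.

Definition fpattern (n : nat) := nat -> {set 'I_n}.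

Definition fp_nondecreasing (n : nat) (F : fpattern n) : Prop :=
  forall t t' : nat, t <= t' -> F t \subset F t'.

Definition Faulty (n : nat) (F : fpattern n) : {set 'I_n} :=
  [set p | `[< exists t, p \in F t >]].

Definition ivec (n : nat) := 'I_n -> bool.   (* 0 = false, 1 = true *)

(* P(F,V) as a (boolean) subset of {0,1}; nonemptiness is not needed below *)
Definition agreement_problem (n : nat) := fpattern n -> ivec n -> pred bool.

Record task (n : nat) := Task { tprob : agreement_problem n; tres : nat }.

Definition kTAg_prob (n k : nat) : agreement_problem n := fun F V d =>
  if k <= #|[set p | ~~ V p]| then d == false
  else if [forall p, V p] && (#|Faulty F| <= k - 1) then d == true
  else true.

Definition kTAg (n k f : nat) : task n := @Task n (@kTAg_prob n k) f.
Definition ConsT (n f : nat) : task n := @kTAg n n f.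

(* The event a process receives in a step: nothing, a message from a
   sender, or the oracle's response d to consultation c. *)
Inductive event (n : nat) (M : Type) :=
| EvNone
| EvMsg of 'I_n & M
| EvResp of nat & bool.
Arguments EvNone {n M}.
Arguments EvMsg {n M}.
Arguments EvResp {n M}.

(* A step: from the local state and the received event, compute the new
   state, the messages sent (destination, content) and possibly a query
   (consultation index c, query value b).  [decision s] is the decision
   recorded in local state s (None = undecided). *)
Record algorithm (n : nat) := Algorithm {
  St : Type;
  Msg : Type;
  init : 'I_n -> bool -> St;
  step : 'I_n -> St -> event n Msg ->
         St * seq ('I_n * Msg) * option (nat * bool);
  decision : St -> option bool }.
Arguments step {n} a _ _ _.
Arguments decision {n} a _.
Arguments init {n} a _ _.

(* A run is determined by the adversary's choices: the schedule, the events
   delivered, the origin (send time, index in the sent list) of each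
   delivered message, and the oracle's (common) response per consultation. *)
Record run (n : nat) (A : algorithm n) := Run {
  sched : nat -> option 'I_n;
  evt : nat -> event n (Msg A);
  src : nat -> nat * nat;
  resp : nat -> option bool }.

Definition lookup (T : Type) (s : seq T) (i : nat) : option T :=
  nth None (map Some s) i.

Section Runs.
Variables (n : nat) (A : algorithm n) (V : ivec n) (R : run A).

(* conf t p = local state of p at time t (before the step of time t) *)
Fixpoint conf (t : nat) : 'I_n -> St A :=
  match t with
  | 0 => fun p => init A p (V p)
  | t'.+1 => fun p =>
      if sched R t' == Some p
      then (step A p (conf t' p) (evt R t')).1.1
      else conf t' p
  end.

Definition sent (t : nat) : seq ('I_n * Msg A) :=
  if sched R t is Some p then (step A p (conf t p) (evt R t)).1.2 else [::].

Definition qry (t : nat) : option (nat * bool) :=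
  if sched R t is Some p then (step A p (conf t p) (evt R t)).2 else None.

(* query vector of consultation c: p's query in c is b
   (only the first query of p in consultation c counts) *)
Definition Wq (c : nat) (p : 'I_n) (b : bool) : Prop :=
  exists t, [/\ sched R t = Some p, qry t = Some (c, b) &
    forall t' b', t' < t -> sched R t' = Some p -> qry t' <> Some (c, b')].

Definition queried_before (p : 'I_n) (c t : nat) : Prop :=
  exists t' b, [/\ t' < t, sched R t' = Some p & qry t' = Some (c, b)].

Definition admissible (T2 : task n) (consistent : bool) (F : fpattern n)
  : Prop :=
  (forall t p, sched R t = Some p -> p \notin F t) /\
  (forall p, p \notin Faulty F -> forall t, exists t', t <= t' /\ sched R t' = Some p) /\
  (forall t p q m, sched R t = Some p -> evt R t = EvMsg q m ->
     (src R t).1 < t /\ sched R (src R t).1 = Some q /\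
     lookup (sent (src R t).1) (src R t).2 = Some (p, m)) /\
  (forall t1 t2 p1 p2 q1 q2 m1 m2, t1 <> t2 ->
     sched R t1 = Some p1 -> evt R t1 = EvMsg q1 m1 ->
     sched R t2 = Some p2 -> evt R t2 = EvMsg q2 m2 -> src R t1 <> src R t2) /\
  (forall t' i q p m, sched R t' = Some q -> lookup (sent t') i = Some (p, m) ->
     p \notin Faulty F ->
     exists t, [/\ sched R t = Some p, evt R t = EvMsg q m & src R t = (t', i)]) /\
  (forall t p c d, sched R t = Some p -> evt R t = EvResp c d ->
     [/\ resp R c = Some d, queried_before p c t &
       forall t' d', t' < t -> sched R t' = Some p -> evt R t' <> EvResp c d']) /\
  (forall c d, resp R c = Some d ->
     forall V' : ivec n, (forall p b, Wq c p b -> V' p = b) -> tprob T2 F V' d) /\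
  (forall c (S : {set 'I_n}), n - tres T2 <= #|S| ->
     (forall p, p \in S -> exists b, Wq c p b) ->
     exists d, resp R c = Some d /\
       forall p, p \notin Faulty F -> (exists b, Wq c p b) ->
         exists t, sched R t = Some p /\ evt R t = EvResp c d) /\
  (consistent ->
     forall c1 c2 d, (forall p b, Wq c2 p b -> Wq c1 p b) ->
       resp R c2 = Some d -> resp R c1 = Some d).

End Runs.

Definition solves (n : nat) (A : algorithm n) (T1 T2 : task n)
  (consistent : bool) : Prop :=
  forall (F : fpattern n), fp_nondecreasing F -> #|Faulty F| <= tres T1 ->
  forall (V : ivec n) (R : run A), admissible V R T2 consistent F ->
    (forall p, p \notin Faulty F -> exists t d, decision A (conf V R t p) = Some d) /\
    (forall p t t' d, t <= t' -> decision A (conf V R t p) = Some d ->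
       decision A (conf V R t' p) = Some d) /\
    (forall p q t t' d1 d2, decision A (conf V R t p) = Some d1 ->
       decision A (conf V R t' q) = Some d2 -> d1 = d2) /\
    (forall p t d, decision A (conf V R t p) = Some d -> tprob T1 F V d).

Definition C_reducible (n : nat) (T1 T2 : task n) : Prop :=
  exists A : algorithm n, solves A T1 T2 false.
Definition cC_reducible (n : nat) (T1 T2 : task n) : Prop :=
  exists A : algorithm n, solves A T1 T2 true.
Arguments ConsT : clear implicits.
Arguments kTAg : clear implicits.
Arguments C_reducible {n} T1 T2.
Arguments cC_reducible {n} T1 T2.

(* Main.v *)
Require Import Defs.
From mathcomp Require Import all_boot boolp zify.
Set Implicit Arguments. Unset Strict Implicit. Unset Printing Implicit Defensive.

Section Model.
Variables (n : nat) (A : algorithm n).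

Definition item := ('I_n * nat * nat + nat)%type.

Record cfg := Cfg {
  ls : 'I_n -> St A;
  out : 'I_n -> seq (seq ('I_n * Msg A));
  dlv : 'I_n * nat * nat -> bool;
  qd : 'I_n -> nat -> bool;
  rc : 'I_n -> nat -> bool }.

Definition msgof (C : cfg) (x : 'I_n * nat * nat) : option ('I_n * Msg A) :=
  lookup (nth [::] (out C x.1.1) x.1.2) x.2.

Definition cev (C : cfg) (a : option item) : event n (Msg A) :=
  match a with
  | None => EvNone
  | Some (inl x) => if msgof C x is Some (_, m) then EvMsg x.1.1 m else EvNone
  | Some (inr c) => EvResp c false
  end.

Definition appl (C : cfg) (p : 'I_n) (a : option item) : bool :=
  match a with
  | None => true
  | Some (inl x) => (if msgof C x is Some (d, _) then d == p else false) && ~~ dlv C x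
  | Some (inr c) => qd C p c && ~~ rc C p c
  end.

Definition dlvu (C : cfg) (a : option item) :=
  fun y => if a is Some (inl x) then (y == x) || dlv C y else dlv C y.
Definition rcu (C : cfg) (p : 'I_n) (a : option item) :=
  fun q c => if a is Some (inr c') then ((q == p) && (c == c')) || rc C q c else rc C q c.
Definition qdu (C : cfg) (p : 'I_n) (o : option (nat * bool)) :=
  fun q c => if o is Some (c', _) then ((q == p) && (c == c')) || qd C q c else qd C q c.

Definition apply (C : cfg) (p : 'I_n) (a : option item) : cfg :=
  let r := step A p (ls C p) (cev C a) in
  Cfg (fun q => if q == p then r.1.1 else ls C q)
      (fun q => if q == p then rcons (out C p) r.1.2 else out C q)
      (dlvu C a) (qdu C p r.2) (rcu C p a).

Definition exec (C : cfg) (s : seq ('I_n * option item)) : cfg :=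
  foldl (fun C x => apply C x.1 x.2) C s.

Fixpoint valid (S : {set 'I_n}) (C : cfg) (s : seq ('I_n * option item)) : Prop :=
  match s with
  | [::] => True
  | x :: s' => [/\ appl C x.1 x.2, x.1 \notin S & valid S (apply C x.1 x.2) s']
  end.

Lemma exec_cat C s1 s2 : exec C (s1 ++ s2) = exec (exec C s1) s2.
Proof. by rewrite /exec foldl_cat. Qed.

Lemma exec_rcons C s x : exec C (rcons s x) = apply (exec C s) x.1 x.2.
Proof. by rewrite -cats1 exec_cat. Qed.

Lemma valid_cat S C s1 s2 : valid S C (s1 ++ s2) <-> valid S C s1 /\ valid S (exec C s1) s2.
Proof.
elim: s1 C => [|x s1 IH] C /=; first by split=> // [[]].
split.
  by case=> a b /IH [c d].
by case=> [[a b c] d]; split=> //; apply/IH.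
Qed.

Lemma valid_rcons S C s x : valid S C (rcons s x) <->
  valid S C s /\ [/\ appl (exec C s) x.1 x.2 & x.1 \notin S].
Proof.
rewrite -cats1 valid_cat /=; split; first by case=> a [b c _].
by case=> a [b c].
Qed.

Lemma valid_sub (S S' : {set 'I_n}) C s : S' \subset S -> valid S C s -> valid S' C s.
Proof.
move=> sub; elim: s C => [|x s IH] C //= [a b c]; split=> //; last exact: IH.
by apply: contra b; apply: (subsetP sub).
Qed.

Lemma lookup_size (T : Type) (s : seq T) i v : lookup s i = Some v -> i < size s.
Proof.
rewrite /lookup; case: (ltnP i (size s)) => // h.
by rewrite nth_default // size_map.
Qed.

Lemma msgof_apply C p a x v : msgof C x = Some v -> msgof (apply C p a) x = Some v.
Proof.
rewrite /msgof /apply /=; case: eqP => // ->.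
move=> h; have hs := lookup_size h.
have : x.1.2 < size (out C p).
  case: (ltnP x.1.2 (size (out C p))) => // hh.
  by move: hs; rewrite nth_default.
by move=> hj; rewrite nth_rcons hj.
Qed.

Lemma ls_apply C p a q : q != p -> ls (apply C p a) q = ls C q.
Proof. by rewrite /apply /= => /negbTE ->. Qed.

Lemma ls_apply_same C p a : ls (apply C p a) p = (step A p (ls C p) (cev C a)).1.1.
Proof. by rewrite /apply /= eqxx. Qed.

Lemma cev_apply C p a p' a' : appl C p' a' -> cev (apply C p a) a' = cev C a'.
Proof.
case: a' => [[x|c]|] //=.
by case E: (msgof C x) => [[d m]|] // _; rewrite (msgof_apply _ _ E).
Qed.

Lemma appl_apply C p a p' a' : appl C p a -> appl C p' a' -> (p, a) != (p', a') ->
  appl (apply C p a) p' a'.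
Proof.
move=> h h' hne; case: a' h' hne => [[x|c]|] //=.
- case E: (msgof C x) => [[d m]|] //= /andP [/eqP dp nd] hne.
  rewrite (msgof_apply _ _ E) dp eqxx /= /dlvu.
  case: a h hne => [[y|c]|] //= h hne.
  rewrite (negbTE nd) orbF; apply/eqP => xy; subst y.
  move: h; rewrite E => /andP [/eqP dp' _].
  by move: hne; rewrite -dp dp' eqxx.
- move=> /andP [q nr] hne; rewrite /qdu /rcu.
  case: (step A p (ls C p) (cev C a)).2 => [[c' b]|]; rewrite ?q ?orbT /=;
  (case: a h hne => [[y|c'']|] //= h hne; rewrite (negbTE nr) orbF;
   apply/negP => /andP [/eqP e1 /eqP e2]; subst;
   by rewrite eqxx in hne).
Qed.
Lemma apply_comm C p a p' a' : p != p' -> appl C p a -> appl C p' a' ->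
  apply (apply C p a) p' a' = apply (apply C p' a') p a.
Proof.
move=> npp h h'.
have E1 := cev_apply p a h'; have E2 := cev_apply p' a' h.
have L1 : ls (apply C p a) p' = ls C p' by rewrite ls_apply // eq_sym.
have L2 : ls (apply C p' a') p = ls C p by rewrite ls_apply.
rewrite /apply /= in E1 E2 L1 L2 *.
rewrite E1 E2 L1 L2.
have np'p : p' != p by rewrite eq_sym.
congr Cfg.
- apply: funext => q /=; case: (eqVneq q p') => [->|nq1];
    first by rewrite ?eqxx ?(negbTE np'p).
  rewrite ?(negbTE nq1); case: (eqVneq q p) => [e|nq2] //; rewrite ?e;
  by rewrite ?eqxx ?(negbTE npp) ?(negbTE nq2).
- apply: funext => q /=; case: (eqVneq q p') => [->|nq1];
    first by rewrite ?eqxx ?(negbTE np'p).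
  rewrite ?(negbTE nq1); case: (eqVneq q p) => [e|nq2] //; rewrite ?e;
  by rewrite ?eqxx ?(negbTE npp) ?(negbTE nq2).
- rewrite /dlvu /=; apply: funext => y.
  by case: a {h E1 E2 L1 L2} => [[x|c]|] //; case: a' {h'} => [[x'|c']|] //=;
     rewrite !orbA; congr orb; rewrite orbC.
- rewrite /qdu /=; apply: funext => q; apply: funext => c.
  case: (step A p (ls C p) (cev C a)).2 => [[c1 b1]|];
  case: (step A p' (ls C p') (cev C a')).2 => [[c2 b2]|] //=;
  by rewrite !orbA; congr orb; rewrite orbC.
- rewrite /rcu /=; apply: funext => q; apply: funext => c.
  by case: a {h E1 E2 L1 L2} => [[x|c1]|] //; case: a' {h'} => [[x'|c2]|] //=;
     rewrite !orbA; congr orb; rewrite orbC.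
Qed.

Lemma exec_comm S C t p a : valid S C t -> p \in S -> appl C p a ->
  [/\ valid S (apply C p a) t, appl (exec C t) p a &
      exec (apply C p a) t = apply (exec C t) p a].
Proof.
elim: t C => [|x t IH] C //= [h1 h2 h3] pS h.
have nxp : x.1 != p by apply: contraNneq h2 => ->.
have hx : appl (apply C p a) x.1 x.2.
  apply: appl_apply => //; apply: contraNneq nxp; by case=> ->.
have hp : appl (apply C x.1 x.2) p a.
  apply: appl_apply => //; apply: contraNneq nxp; by case=> ->.
have [v1 v2 v3] := IH _ h3 pS hp.
rewrite apply_comm //; last by rewrite eq_sym.
Qed.

Lemma ls_exec_out S C t p : valid S C t -> p \in S -> ls (exec C t) p = ls C p.
Proof.
elim: t C => [|x t IH] C //= [h1 h2 h3] pS.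
rewrite IH // ls_apply //; by apply: contraNneq h2 => <-.
Qed.

Definition init_cfg (V : ivec n) : cfg :=
  Cfg (fun p => init A p (V p)) (fun _ => [::]) (fun _ => false)
      (fun _ _ => false) (fun _ _ => false).

Definition upd_ls (C : cfg) (j : 'I_n) (s : St A) : cfg :=
  Cfg (fun q => if q == j then s else ls C q) (out C) (dlv C) (qd C) (rc C).

Lemma apply_upd C j s p a : p != j ->
  apply (upd_ls C j s) p a = upd_ls (apply C p a) j s.
Proof.
move=> npj.
have E : cev (upd_ls C j s) a = cev C a by case: a => [[x|c]|].
have L : ls (upd_ls C j s) p = ls C p by rewrite /= (negbTE npj).
rewrite /apply E L /upd_ls /=; congr Cfg.
apply: funext => q /=; case: (eqVneq q p) => [->|nq] //.
by rewrite (negbTE npj).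
Qed.

Lemma appl_upd C j s p a : appl (upd_ls C j s) p a = appl C p a.
Proof. by case: a => [[x|c]|]. Qed.

Lemma exec_upd S C j s t : valid S C t -> j \in S ->
  valid S (upd_ls C j s) t /\ exec (upd_ls C j s) t = upd_ls (exec C t) j s.
Proof.
elim: t C => [|x t IH] C //= [h1 h2 h3] jS.
have nxj : x.1 != j by apply: contraNneq h2 => ->.
rewrite apply_upd // appl_upd; have [v e] := IH _ h3 jS; by split.
Qed.

Section Realize.
Variables (V : ivec n) (om : nat -> 'I_n * option item).

Fixpoint cfo (t : nat) : cfg :=
  if t is t'.+1 then apply (cfo t') (om t').1 (om t').2 else init_cfg V.

Lemma cfo_exec t u : cfo (t + u) = exec (cfo t) (mkseq (fun i => om (t + i)) u).
Proof.
elim: u => [|u IH]; first by rewrite addn0.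
by rewrite addnS mkseqS exec_rcons -IH.
Qed.

Hypothesis Happ : forall t, appl (cfo t) (om t).1 (om t).2.

Lemma valid_seg (S : {set 'I_n}) t u : (forall i, t <= i < t + u -> (om i).1 \notin S) ->
  valid S (cfo t) (mkseq (fun i => om (t + i)) u).
Proof.
elim: u => [|u IH] h; first by []. rewrite mkseqS; apply/valid_rcons; split.
  by apply: IH => i /andP [a b]; apply: h; rewrite a /= addnS ltnW.
by rewrite -cfo_exec; split; [apply: Happ | apply: h; rewrite leq_addr /= addnS ltnSn].
Qed.

Definition sz t q := size (out (cfo t) q).

Lemma out_S t q : out (cfo t.+1) q =
  if q == (om t).1 then rcons (out (cfo t) q)
    (step A (om t).1 (ls (cfo t) (om t).1) (cev (cfo t) (om t).2)).1.2
  else out (cfo t) q.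
Proof. by rewrite /= /apply /=; case: eqP => // ->. Qed.

Lemma sz_S t q : sz t.+1 q = sz t q + (q == (om t).1).
Proof. by rewrite /sz out_S; case: eqP; rewrite ?size_rcons ?addn1 ?addn0. Qed.

Lemma sz_mono t t' q : t <= t' -> sz t q <= sz t' q.
Proof.
move/subnK => <-; elim: (t' - t) => [|d IH] //.
by rewrite addSn sz_S (leq_trans IH) ?leq_addr.
Qed.

Lemma nth_out_stable t t' q j : j < sz t q -> t <= t' ->
  nth [::] (out (cfo t') q) j = nth [::] (out (cfo t) q) j.
Proof.
move=> hj /subnK <-; elim: (t' - t) => [|d IH] //.
rewrite addSn out_S; case: eqP => // _.
by rewrite nth_rcons (leq_trans hj (sz_mono _ (leq_addl _ _))) IH.
Qed.

Lemma sz_exists t q j : j < sz t q -> exists2 u, u < t & (om u).1 = q /\ sz u q = j.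
Proof.
elim: t => [|t IH] //; rewrite sz_S => hj.
case: (ltnP j (sz t q)) => hj'.
  by have [u hu hh] := IH hj'; exists u => //; apply: ltnW.
exists t => //; case: eqP hj => [e|_]; last by rewrite addn0 ltnNge hj'.
by rewrite addn1 ltnS => h; split=> //; apply/eqP; rewrite eqn_leq h hj'.
Qed.

Lemma sz_uniq u u' q : (om u).1 = q -> (om u').1 = q -> sz u q = sz u' q -> u = u'.
Proof.
wlog: u u' / u < u'.
  move=> W h1 h2 e; case: (ltngtP u u') => [lt|lt|//]; first exact: W.
  by symmetry; apply: W.
move=> lt h1 _ e; have := sz_mono q lt; rewrite sz_S h1 eqxx addn1 -e ltnn //.
Qed.

Lemma sent_nth u t q : (om u).1 = q -> u < t ->
  nth [::] (out (cfo t) q) (sz u q) =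
  (step A q (ls (cfo u) q) (cev (cfo u) (om u).2)).1.2.
Proof.
move=> hq ht; rewrite (nth_out_stable (t := u.+1)) //; last by rewrite sz_S hq eqxx addn1.
by rewrite out_S hq eqxx nth_rcons ltnn eqxx.
Qed.

Definition gt (q : 'I_n) (j : nat) : nat :=
  match pselect (exists u, ((om u).1 == q) && (sz u q == j)) with
  | left h => ex_minn h
  | right _ => 0
  end.

Lemma gt_spec u q : (om u).1 = q -> gt q (sz u q) = u.
Proof.
move=> hq; rewrite /gt; case: pselect => [h|[]]; last by exists u; rewrite hq !eqxx.
case: (ex_minnP h) => m /andP [/eqP h1 /eqP h2] _.
by apply: (sz_uniq h1 hq).
Qed.

Lemma dlv_mono t t' y : t <= t' -> dlv (cfo t) y -> dlv (cfo t') y.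
Proof.
move/subnK => <-; elim: (t' - t) => [|d IH] // h.
rewrite addSn /= /dlvu; case: (om (d + t)).2 => [[x|c]|]; by rewrite ?IH ?orbT.
Qed.

Lemma rc_mono t t' p c : t <= t' -> rc (cfo t) p c -> rc (cfo t') p c.
Proof.
move/subnK => <-; elim: (t' - t) => [|d IH] // h.
rewrite addSn /= /rcu; case: (om (d + t)).2 => [[x|c']|]; by rewrite ?IH ?orbT.
Qed.

Lemma dlv_inv t q j i : dlv (cfo t) (q, j, i) -> j < sz t q.
Proof.
elim: t => [|t IH] //; rewrite sz_S => h.
have : dlvu (cfo t) (om t).2 (q, j, i) by [].
rewrite /dlvu; have := Happ t; case: (om t).2 => [[x|c]|] /= hap.
- case/orP => [/eqP e|/IH hh]; last by rewrite ltn_addr.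
  subst x; move: hap; rewrite /msgof /=; case E: lookup => [[d m]|] // _.
  have hs := lookup_size E.
  case: (ltnP j (sz t q)) => hj; first by rewrite ltn_addr.
  by move: hs; rewrite nth_default.
- by move/IH => hh; rewrite ltn_addr.
- by move/IH => hh; rewrite ltn_addr.
Qed.

Lemma rc_inv t p c : rc (cfo t) p c -> exists2 u, u < t & om u = (p, Some (inr c)).
Proof.
elim: t => [|t IH] //=; rewrite /rcu.
case E: (om t) => [q a]; case: a E => [[x|c']|] E /=;
  try by move/IH => [u hu e]; exists u => //; apply: ltnW.
case/orP => [/andP [/eqP e1 /eqP e2]|/IH [u hu e]]; first by exists t; rewrite // e1 e2.
by exists u => //; apply: ltnW.
Qed.

Lemma qd_inv t p c : qd (cfo t) p c -> exists2 u, u < t & (om u).1 = p /\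
  exists b, (step A p (ls (cfo u) p) (cev (cfo u) (om u).2)).2 = Some (c, b).
Proof.
elim: t => [|t IH] //=; rewrite /qdu.
case E: (step A (om t).1 _ _).2 => [[c' b]|];
  last by move/IH => [u hu e]; exists u => //; apply: ltnW.
case/orP => [/andP [/eqP e1 /eqP e2]|/IH [u hu e]];
  last by exists u => //; apply: ltnW.
by exists t => //; split=> //; exists b; rewrite e1 E e2.
Qed.

Lemma qd_S t c b : (step A (om t).1 (ls (cfo t) (om t).1) (cev (cfo t) (om t).2)).2 = Some (c, b) ->
  qd (cfo t.+1) (om t).1 c.
Proof. by move=> E; rewrite /= /qdu E !eqxx. Qed.


Lemma msgof_mono t t' x v : msgof (cfo t) x = Some v -> t <= t' -> msgof (cfo t') x = Some v.
Proof.
move=> h /subnK <-; elim: (t' - t) => [|d IH] //.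
by rewrite addSn /=; apply: msgof_apply.
Qed.

Lemma msgof_sz t q j i v : msgof (cfo t) (q, j, i) = Some v -> j < sz t q.
Proof.
rewrite /msgof /= => E; have hs := lookup_size E.
by case: (ltnP j (sz t q)) => // hj; move: hs; rewrite nth_default.
Qed.

Lemma evt_msg t q m : cev (cfo t) (om t).2 = EvMsg q m ->
  exists j i, (om t).2 = Some (inl (q, j, i)) /\ msgof (cfo t) (q, j, i) = Some ((om t).1, m).
Proof.
have := Happ t; case: (om t).2 => [[[[q' j] i]|c]|] //= /andP [h _].
case E: msgof h => [[d m']|] //= /eqP ed [e1 e2]; subst.
by exists j, i.
Qed.

Lemma evt_resp t c d : cev (cfo t) (om t).2 = EvResp c d ->
  (om t).2 = Some (inr c) /\ d = false.
Proof.
case: (om t).2 => [[x|c']|] //=; last by case=> -> ->.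
by case: msgof => [[]|].
Qed.

Lemma persist u p a : appl (cfo u) p a -> om u != (p, a) -> appl (cfo u.+1) p a.
Proof.
move=> h ne; rewrite /=; apply: appl_apply => //.
Qed.

Lemma persist_range t t' p a : t <= t' -> appl (cfo t) p a ->
  (forall u, t <= u -> u < t' -> om u != (p, a)) -> appl (cfo t') p a.
Proof.
move/subnK => <-; elim: (t' - t) => [|d IH] // h hn.
rewrite addSn; apply: persist; first by apply: IH => // u h1 h2; apply: hn; rewrite // ltnS ltnW.
by apply: hn; rewrite ?leq_addl // addSn.
Qed.

Lemma nonpend t t' p it : om t = (p, Some it) -> t < t' -> ~~ appl (cfo t') p (Some it).
Proof.
move=> E lt; case: it E => [x|c] E /=.
  have hd : dlv (cfo t.+1) x by rewrite /= /dlvu E /= eqxx.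
  by rewrite (dlv_mono lt hd) andbF.
have hr : rc (cfo t.+1) p c by rewrite /= /rcu E /= !eqxx.
by rewrite (rc_mono lt hr) andbF.
Qed.

Variables (k f T0 : nat) (K S : {set 'I_n}).
Hypothesis HKS : K \subset S.
Hypothesis HSk : k - 1 < #|S|.
Hypothesis Hcr : forall t, (om t).1 \notin (if t < T0 then K else S).
Hypothesis Hlive : forall p, p \notin S -> forall t, exists t', t <= t' /\ (om t').1 = p.
Hypothesis Hfair : forall p, p \notin S -> forall t it, appl (cfo t) p (Some it) ->
  exists t', t <= t' /\ om t' = (p, Some it).

Definition Fp : fpattern n := fun t => if t < T0 then K else S.

Definition Rn : run A :=
  Run (fun t => Some (om t).1) (fun t => cev (cfo t) (om t).2)
      (fun t => if (om t).2 is Some (inl x) then (gt x.1.1 x.1.2, x.2) else (0, 0))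
      (fun _ => Some false).

Lemma conf_cfo t : conf V Rn t = ls (cfo t).
Proof.
elim: t => [|t IH] //=; apply: funext => p /=; rewrite IH.
case: (eqVneq p (om t).1) => [->|np]; rewrite ?eqxx //=.
by case: eqP => // [[e]]; rewrite e eqxx in np.
Qed.

Lemma sent_Rn t : sent V Rn t =
  (step A (om t).1 (ls (cfo t) (om t).1) (cev (cfo t) (om t).2)).1.2.
Proof. by rewrite /sent /= conf_cfo. Qed.

Lemma qry_Rn t : qry V Rn t =
  (step A (om t).1 (ls (cfo t) (om t).1) (cev (cfo t) (om t).2)).2.
Proof. by rewrite /qry /= conf_cfo. Qed.

Lemma Faulty_Fp : Faulty Fp = S.
Proof.
apply/setP => p; rewrite inE; apply/asboolP/idP.
  by case=> t; rewrite /Fp; case: ifP => // _ /(subsetP HKS).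
by move=> h; exists T0; rewrite /Fp ltnn.
Qed.

Lemma Fp_nondec : fp_nondecreasing Fp.
Proof.
move=> t t' le; rewrite /Fp; case: ifP => h1; case: ifP => h2 //.
by move: (leq_ltn_trans le h2); rewrite h1.
Qed.

Lemma src_msg t q j i : (om t).2 = Some (inl (q, j, i)) -> j < sz t q ->
  exists u, [/\ u < t, (om u).1 = q, sz u q = j & gt q j = u].
Proof.
move=> E hj; have [u hu [h1 h2]] := sz_exists hj.
by exists u; split=> //=; rewrite -h2 gt_spec.
Qed.

Theorem realize_adm : admissible V Rn (kTAg n k f) true Fp.
Proof.
split.
  by move=> t p /= [<-]; apply: Hcr.
split.
  move=> p; rewrite Faulty_Fp => hp t; have [t' [h1 h2]] := Hlive hp t.
  by exists t'; rewrite /= h2.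
split.
  move=> t p q m /= [hp] /evt_msg [j [i [E hm]]].
  have [u [hu h1 h2 hg]] := src_msg E (msgof_sz hm).
  rewrite E /= hg; split=> //; split; first by rewrite /= h1.
  rewrite /= sent_Rn h1 -(sent_nth h1 hu) h2.
  by move: hm; rewrite /msgof /= hp.
split.
  move=> t1 t2 p1 p2 q1 q2 m1 m2 ne /= [h1] /evt_msg [j1 [i1 [E1 hm1]]]
    [h2] /evt_msg [j2 [i2 [E2 hm2]]].
  have [u1 [_ a1 b1 g1]] := src_msg E1 (msgof_sz hm1).
  have [u2 [_ a2 b2 g2]] := src_msg E2 (msgof_sz hm2).
  rewrite E1 E2 /= g1 g2.
  case=> eu ei.
  have eq : q1 = q2 by rewrite -a1 -a2 eu.
  have ej : j1 = j2 by rewrite -b1 -b2 eu eq.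
  rewrite -eq -ej -ei in E2.
  have key : forall ta tb, ta < tb -> (om ta).2 = Some (inl (q1, j1, i1)) ->
    (om tb).2 = Some (inl (q1, j1, i1)) -> False.
    move=> ta tb lt Ea Eb.
    have hd : dlv (cfo ta.+1) (q1, j1, i1) by rewrite /= /dlvu Ea eqxx.
    have := Happ tb; rewrite Eb /= => /andP [_].
    by rewrite (dlv_mono lt hd).
  case: (ltngtP t1 t2) => [lt|lt|e]; [exact: key lt E1 E2 | exact: key lt E2 E1 | by []].
split.
  move=> t' i q p m /= [hq] hl; rewrite Faulty_Fp => hp.
  rewrite sent_Rn in hl.
  have hm : msgof (cfo t'.+1) (q, sz t' q, i) = Some (p, m).
    by rewrite /msgof out_S /= hq eqxx nth_rcons ltnn eqxx -hq.
  have nd : ~~ dlv (cfo t'.+1) (q, sz t' q, i).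
    rewrite /= /dlvu; apply/negP => h.
    have h' : dlv (cfo t') (q, sz t' q, i).
      move: h; have := Happ t'; case: (om t').2 => [[y|c]|] //= /andP [hy _].
      case/orP => // /eqP ey; subst y.
      by move: hy; case E: msgof => [v|] //; have := msgof_sz E; rewrite ltnn.
    by have := dlv_inv h'; rewrite ltnn.
  have ha : appl (cfo t'.+1) p (Some (inl (q, sz t' q, i))) by rewrite /= hm eqxx nd.
  have [t [lt Et]] := Hfair hp ha.
  exists t; split; first by rewrite /= Et.
    by rewrite /= Et /= (msgof_mono hm lt).
  rewrite /= Et /=; congr pair.
  by rewrite -hq gt_spec.
split.
  move=> t p c d /= [hp] /evt_resp [E ->]; have := Happ t; rewrite E /= hp => /andP [hq hr].
  split=> //.
    have [u hu [h1 [b hb]]] := qd_inv hq.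
    by exists u, b; split=> //; rewrite ?qry_Rn /= ?h1.
  move=> t' d' lt /= [h'] /evt_resp [E' _].
  have hr' : rc (cfo t'.+1) p c by rewrite /= /rcu E' h' !eqxx.
  by rewrite (rc_mono lt hr') in hr.
split.
  move=> c d /= [<-] V' _; rewrite /kTAg_prob /=.
  case: ifP => // _; rewrite Faulty_Fp.
  by case: ifP => //; rewrite leqNgt HSk andbF.
split.
  move=> c S' _ _; exists false; split=> // p hp [b [t0 [h1 h2 _]]].
  move: h1 => /= [h1]; rewrite qry_Rn in h2.
  have hq := qd_S h2; rewrite h1 in hq.
  case hr: (rc (cfo t0.+1) p c).
    by have [u _ Eu] := rc_inv hr; exists u; rewrite /= Eu.
  have ha : appl (cfo t0.+1) p (Some (inr c)) by rewrite /appl hq hr.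
  move: hp; rewrite Faulty_Fp => hp.
  by have [t [_ Et]] := Hfair hp ha; exists t; rewrite /= Et.
by move=> _ c1 c2 d _ /= [<-].
Qed.

End Realize.

Lemma valid_nth (S : {set 'I_n}) C sq i d : valid S C sq -> i < size sq ->
  appl (exec C (take i sq)) (nth d sq i).1 (nth d sq i).2 /\ (nth d sq i).1 \notin S.
Proof.
elim: sq C i => [|x sq IH] C [|i] //= [h1 h2 h3] hi; first by [].
by apply: IH.
Qed.

Section Build.
Variables (V : ivec n) (K S : {set 'I_n}) (Good : cfg -> Prop)
  (s0 : seq ('I_n * option item)) (p0 : 'I_n).
Hypothesis HKS : K \subset S.
Hypothesis Hp0 : p0 \notin S.
Hypothesis Hv0 : valid K (init_cfg V) s0.
Hypothesis HG0 : Good (exec (init_cfg V) s0).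
Hypothesis Hext : forall C p a, Good C -> p \notin S -> appl C p a ->
  exists s, [/\ valid S C s, appl (exec C s) p a & Good (apply (exec C s) p a)].

Definition nxt C p a : seq ('I_n * option item) :=
  match pselect (exists s, [/\ valid S C s, appl (exec C s) p a & Good (apply (exec C s) p a)]) with
  | left h => proj1_sig (cid h)
  | right _ => [::]
  end.

Lemma nxt_spec C p a : Good C -> p \notin S -> appl C p a ->
  [/\ valid S C (nxt C p a), appl (exec C (nxt C p a)) p a &
      Good (apply (exec C (nxt C p a)) p a)].
Proof.
move=> g hp ha; rewrite /nxt; case: pselect => [h|[]]; last exact: Hext.
exact: (proj2_sig (cid h)).
Qed.

Lemma n_pos : 0 < n.
Proof. exact: leq_ltn_trans (leq0n p0) (ltn_ord p0). Qed.

Definition tp (s : nat) : 'I_n :=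
  let q := Ordinal (ltn_pmod s n_pos) in if q \in S then p0 else q.

Lemma tp_notin s : tp s \notin S.
Proof. by rewrite /tp; case: ifP => // /negbT. Qed.

Lemma tp_p t p : p \notin S -> tp (t * n + p) = p.
Proof.
move=> hp; have e : Ordinal (ltn_pmod (t * n + p) n_pos) = p.
  by apply: val_inj => /=; rewrite modnMDl modn_small.
by rewrite /tp e (negbTE hp).
Qed.

Definition pendc C p (c : nat) : bool :=
  if pickle_inv c is Some it then appl C p (Some it) else false.

Definition minpend C p : option item :=
  match pselect (exists c, pendc C p c) with
  | left h => pickle_inv (ex_minn h)
  | right _ => None
  end.

Lemma minpend_appl C p : appl C p (minpend C p).
Proof.
rewrite /minpend; case: pselect => // h; case: (ex_minnP h) => m.
by rewrite /pendc; case: pickle_inv.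
Qed.

Lemma minpend_min C p it : appl C p (Some it) ->
  exists y, [/\ minpend C p = Some y, pickle y <= pickle it & appl C p (Some y)].
Proof.
move=> ha; have h0 : pendc C p (pickle it) by rewrite /pendc pickleK_inv.
rewrite /minpend; case: pselect => [h|[]]; last by exists (pickle it).
case: (ex_minnP h) => m hm hmin; move: hm; rewrite /pendc.
case E: (pickle_inv m) => [y|] // hy; exists y; split=> //.
have := @pickle_invK item m; rewrite E /= => ->; exact: hmin.
Qed.

Definition Cs L := exec (init_cfg V) L.

Fixpoint st (s : nat) : seq ('I_n * option item) :=
  if s is s'.+1 then
    st s' ++ rcons (nxt (Cs (st s')) (tp s') (minpend (Cs (st s')) (tp s')))
                   (tp s', minpend (Cs (st s')) (tp s'))
  else s0.

Definition omb t := nth (p0, None) (st t.+1) t.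

Lemma st_grow s : size (st s) < size (st s.+1).
Proof. by rewrite /= size_cat size_rcons addnS ltnS leq_addr. Qed.

Lemma st_size s : s <= size (st s).
Proof. by elim: s => [|s IH] //; apply: leq_ltn_trans IH (st_grow s). Qed.

Lemma st_prefix s s' : s <= s' -> exists l, st s' = st s ++ l.
Proof.
move/subnK => <-; elim: (s' - s) => [|d IH]; first by exists [::]; rewrite cats0.
by case: IH => l e; rewrite addSn /= e; eexists; rewrite -catA.
Qed.

Lemma omb_nth s t : t < size (st s) -> omb t = nth (p0, None) (st s) t.
Proof.
move=> ht; rewrite /omb; case: (leqP s t.+1) => h.
  by case: (st_prefix h) => l ->; rewrite nth_cat ht.
case: (st_prefix (ltnW h)) => l ->; rewrite nth_cat.
by rewrite (leq_trans (ltnSn t) (st_size t.+1)).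
Qed.

Lemma cfo_st s t : t <= size (st s) -> cfo V omb t = Cs (take t (st s)).
Proof.
move=> ht; have := cfo_exec V omb 0 t; rewrite add0n => ->.
congr exec; apply: (@eq_from_nth _ (p0, None)).
  by rewrite size_mkseq size_takel.
move=> i; rewrite size_mkseq => hi; rewrite nth_mkseq // nth_take // add0n.
by apply: omb_nth; apply: leq_trans ht.
Qed.

Lemma cfo_Cs s : cfo V omb (size (st s)) = Cs (st s).
Proof. by rewrite (cfo_st (leqnn _)) take_size. Qed.

Lemma st_s0 s : st s = s0 ++ drop (size s0) (st s).
Proof. by case: (st_prefix (leq0n s)) => l ->; rewrite drop_cat ltnn subnn drop0. Qed.

Lemma st_inv s : Good (Cs (st s)) /\ valid S (Cs s0) (drop (size s0) (st s)).
Proof.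
elim: s => [|s [g v]]; first by rewrite drop_size.
have e : Cs (st s) = exec (Cs s0) (drop (size s0) (st s)) by rewrite /Cs -exec_cat -st_s0.
have hp := tp_notin s; have ha := minpend_appl (Cs (st s)) (tp s).
have [n1 n2 n3] := nxt_spec g hp ha.
split; first by rewrite /= /Cs exec_cat -/(Cs (st s)) exec_rcons.
rewrite /= drop_cat.
have hs : size s0 <= size (st s) by rewrite (st_s0 s) size_cat leq_addr.
case: ltngtP hs => // [lt|eq] _.
  by apply/valid_cat; split=> //; rewrite -e; apply/valid_rcons.
have ed : drop (size s0) (st s) = [::] by rewrite eq drop_size.
rewrite ed /= in e; rewrite eq subnn drop0; apply/valid_rcons; rewrite -e.
by split.
Qed.

Lemma omb_props t : appl (cfo V omb t) (omb t).1 (omb t).2 /\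
  (omb t).1 \notin (if t < size s0 then K else S).
Proof.
have ht : t < size (st t.+1) := st_size t.+1.
rewrite (cfo_st (ltnW ht)) (omb_nth ht) (st_s0 t.+1) nth_cat take_cat.
case: ifP => h.
  by rewrite /Cs; apply: valid_nth.
have [_ v] := st_inv t.+1.
have hs : t - size s0 < size (drop (size s0) (st t.+1)).
  have hsz : size (st t.+1) = size s0 + size (drop (size s0) (st t.+1)).
    by rewrite {1}(st_s0 t.+1) size_cat.
  move: h; rewrite hsz in ht; move: ht; clear; lia.
have [a b] := valid_nth (p0, None) v hs.
by rewrite /Cs exec_cat.
Qed.

Lemma stage_last s : omb (size (st s.+1)).-1 = (tp s, minpend (Cs (st s)) (tp s)) /\
  size (st s) <= (size (st s.+1)).-1.
Proof.
have hs := st_grow s.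
have hp : 0 < size (st s.+1) by apply: leq_ltn_trans hs.
split; last by rewrite -ltnS prednK.
rewrite (omb_nth (s := s.+1)) ?prednK // nth_last.
by rewrite /= last_cat last_rcons.
Qed.

Lemma main_fair p it T t : p \notin S ->
  (forall t', T <= t' -> forall y, pickle y < pickle it -> ~~ appl (cfo V omb t') p (Some y)) ->
  appl (cfo V omb t) p (Some it) -> exists t', t <= t' /\ omb t' = (p, Some it).
Proof.
move=> hp HT ha.
case: (pselect (exists t', t <= t' /\ omb t' = (p, Some it))) => // hno; exfalso.
have Happ t0 : appl (cfo V omb t0) (omb t0).1 (omb t0).2 by case: (omb_props t0).
have pers t'' : t <= t'' -> appl (cfo V omb t'') p (Some it).
  move=> le; apply: (persist_range Happ le ha) => u h1 _; apply/eqP => e.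
  by apply: hno; exists u.
pose s := maxn t T * n + p.
have hs : maxn t T <= size (st s).
  apply: leq_trans (st_size s); rewrite /s.
  apply: leq_trans (leq_addr _ _); by rewrite leq_pmulr // n_pos.
have := pers _ (leq_trans (leq_maxl _ _) hs); rewrite cfo_Cs => hc.
have [y [hy hle hay]] := minpend_min hc.
have [hl hl2] := stage_last s.
move: hl; rewrite /s tp_p // -/s hy.
case: (ltngtP (pickle y) (pickle it)) hle => // [lt|eq] _.
  have := HT _ (leq_trans (leq_maxr _ _) hs) _ lt; by rewrite cfo_Cs hay.
have eyi : y = it by apply: (pcan_inj pickleK).
move=> e; apply: hno; exists (size (st s.+1)).-1; rewrite e eyi; split=> //.
by apply: leq_trans hl2; apply: leq_trans hs; apply: leq_maxl.
Qed.

Lemma fair_E p N : p \notin S -> exists T, forall t', T <= t' ->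
  forall y, pickle y < N -> ~~ appl (cfo V omb t') p (Some y).
Proof.
move=> hp; elim: N => [|N [T HT]]; first by exists 0.
case: (pselect (exists y : item, pickle y = N)) => [[x hx]|hn]; last first.
  exists T => t' ht' y; rewrite ltnS leq_eqVlt => /orP [/eqP e|lt]; last exact: HT.
  by case: hn; exists y.
case: (pselect (exists t0, T <= t0 /\ appl (cfo V omb t0) p (Some x))) => [[t0 [h0 h1]]|hn'].
  have HT' : forall t', T <= t' -> forall y, pickle y < pickle x ->
    ~~ appl (cfo V omb t') p (Some y) by rewrite hx.
  have [t1 [h2 h3]] := main_fair hp HT' h1.
  exists (maxn T t1.+1) => t' ht' y; rewrite ltnS leq_eqVlt => /orP [/eqP e|lt].
    have eyx : y = x by apply: (pcan_inj pickleK); rewrite e hx.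
    rewrite eyx; apply: (nonpend V h3); apply: leq_trans ht'; apply: leq_maxr.
  by apply: HT => //; apply: leq_trans ht'; apply: leq_maxl.
exists T => t' ht' y; rewrite ltnS leq_eqVlt => /orP [/eqP e|lt]; last exact: HT.
have eyx : y = x by apply: (pcan_inj pickleK); rewrite e hx.
by rewrite eyx; apply/negP => h; apply: hn'; exists t'.
Qed.

Theorem build : exists om, [/\ (forall t, appl (cfo V om t) (om t).1 (om t).2),
   (forall t, (om t).1 \notin (if t < size s0 then K else S)),
   (forall p, p \notin S -> forall t, exists t', t <= t' /\ (om t').1 = p),
   (forall p, p \notin S -> forall t it, appl (cfo V om t) p (Some it) ->
      exists t', t <= t' /\ om t' = (p, Some it)) &
   (forall t, t <= size s0 -> cfo V om t = exec (init_cfg V) (take t s0)) /\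
   (forall t, exists t', t <= t' /\ Good (cfo V om t'))].
Proof.
exists omb; split.
- by move=> t; case: (omb_props t).
- by move=> t; case: (omb_props t).
- move=> p hp t; pose s := t * n + p.
  have [hl hl2] := stage_last s; exists (size (st s.+1)).-1; rewrite hl tp_p //; split=> //.
  apply: leq_trans hl2; apply: leq_trans (st_size s).
  by rewrite /s; apply: leq_trans (leq_addr _ _); rewrite leq_pmulr // n_pos.
- move=> p hp t it ha; have [T HT] := fair_E (pickle it) hp.
  exact: main_fair hp HT ha.
split.
  by move=> t ht; rewrite (cfo_st (s := 0)) //.
- move=> t; exists (size (st t)); split; first exact: st_size.
  by rewrite cfo_Cs; case: (st_inv t).
Qed.
End Build.

Lemma appl_exec (S : {set 'I_n}) C sq p a : appl C p a -> valid S C sq -> (p, a) \notin sq ->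
  appl (exec C sq) p a.
Proof.
elim: sq C => [|x sq IH] C //= ha [h1 h2 h3]; rewrite inE negb_or => /andP [ne ni].
apply: IH => //; apply: appl_apply => //; by rewrite eq_sym; case: x ne {h1 h2 h3}.
Qed.

Lemma ivt (P : nat -> Prop) m : P 0 -> ~ P m -> exists i, [/\ i < m, P i & ~ P i.+1].
Proof.
elim: m => [|m IH] h0 hm; first by [].
case: (pselect (P m)) => hp; first by exists m.
by have [i [a b c]] := IH h0 hp; exists i; split=> //; apply: ltnW.
Qed.

Section FLP.
Variables (k f : nat).
Hypothesis Hk : 1 <= k.
Hypothesis Hkf : k < f.
Hypothesis Hfn : f < n.
Hypothesis Hsol : solves A (ConsT n f) (kTAg n k f) true.

Lemma hkn : k <= n. Proof. by apply: ltnW; apply: ltn_trans Hkf Hfn. Qed.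

Definition K : {set 'I_n} := [set widen_ord hkn i | i in 'I_k].

Lemma card_K : #|K| = k.
Proof.
rewrite card_imset ?card_ord //.
by move=> x y /(congr1 val) /= e; apply: val_inj.
Qed.

Lemma exists_out (S : {set 'I_n}) : #|S| < n -> exists p, p \notin S.
Proof.
move=> h; case: (pselect (exists p, p \notin S)) => // hn; exfalso.
have : S = setT by apply/setP => p; rewrite inE; apply/negPn/negP => hp; apply: hn; exists p.
by move=> e; move: h; rewrite e cardsT card_ord ltnn.
Qed.

Lemma run_props V om T0 (S : {set 'I_n}) :
  (forall t, appl (cfo V om t) (om t).1 (om t).2) ->
  (forall t, (om t).1 \notin (if t < T0 then K else S)) ->
  (forall p, p \notin S -> forall t, exists t', t <= t' /\ (om t').1 = p) ->
  (forall p, p \notin S -> forall t it, appl (cfo V om t) p (Some it) ->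
      exists t', t <= t' /\ om t' = (p, Some it)) ->
  K \subset S -> #|S| <= f ->
  [/\ (forall p, p \notin S -> exists t d, decision A (ls (cfo V om t) p) = Some d),
      (forall p t t' d, t <= t' -> decision A (ls (cfo V om t) p) = Some d ->
          decision A (ls (cfo V om t') p) = Some d),
      (forall p q t t' d1 d2, decision A (ls (cfo V om t) p) = Some d1 ->
          decision A (ls (cfo V om t') q) = Some d2 -> d1 = d2) &
      (forall p t d, decision A (ls (cfo V om t) p) = Some d ->
          kTAg_prob n (Fp T0 K S) V d)].
Proof.
move=> Happ Hcr Hlive Hfair HKS HSf.
have HSk : k - 1 < #|S|.
  by apply: leq_trans (subset_leq_card HKS); rewrite card_K; move: Hk; clear; lia.
have Had := realize_adm Happ f HKS HSk Hcr Hlive Hfair.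
have nd : fp_nondecreasing (Fp T0 K S) by apply: Fp_nondec.
have hc : #|Faulty (Fp T0 K S)| <= tres (ConsT n f) by rewrite Faulty_Fp.
have [T [I [Ag Vd]]] := Hsol nd hc Had.
split.
- move=> p hp; have [|t [d h]] := T p; first by rewrite Faulty_Fp.
  by exists t, d; rewrite -conf_cfo.
- by move=> p t t' d le; rewrite -!conf_cfo; apply: I.
- by move=> p q t t' d1 d2; rewrite -!conf_cfo; apply: Ag.
- by move=> p t d; rewrite -conf_cfo; apply: Vd.
Qed.


Lemma K_out : exists p0, p0 \notin K.
Proof. by apply: exists_out; rewrite card_K; apply: ltn_trans Hkf Hfn. Qed.

Lemma fin_facts V sq : valid K (init_cfg V) sq ->
 [/\ (forall i j p d, i <= j -> j <= size sq ->
        decision A (ls (exec (init_cfg V) (take i sq)) p) = Some d ->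
        decision A (ls (exec (init_cfg V) (take j sq)) p) = Some d),
     (forall i j p q d1 d2, i <= size sq -> j <= size sq ->
        decision A (ls (exec (init_cfg V) (take i sq)) p) = Some d1 ->
        decision A (ls (exec (init_cfg V) (take j sq)) q) = Some d2 -> d1 = d2) &
     (forall p d, decision A (ls (exec (init_cfg V) sq) p) = Some d ->
        kTAg_prob n (Fp (size sq) K K) V d)].
Proof.
move=> hv; have [p0 hp0] := K_out.
have [om [Happ Hcr Hlive Hfair [Hpre _]]] := @build V K K (fun _ => True) sq p0 hp0 hv I
  (fun C p a _ _ ha => ex_intro _ [::] (And3 I ha I)).
have hKf : #|K| <= f by rewrite card_K ltnW.
have [_ I Ag Vd] := run_props Happ Hcr Hlive Hfair (subxx K) hKf.
split.
- by move=> i j p d le hj; rewrite -!Hpre ?(leq_trans le) //; apply: I.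
- by move=> i j p q d1 d2 hi hj; rewrite -!Hpre //; apply: Ag.
- by move=> p d; rewrite -{1}(take_size sq) -Hpre //; apply: Vd.
Qed.

Lemma term_crash V sq (S : {set 'I_n}) : valid K (init_cfg V) sq -> K \subset S -> #|S| <= f ->
  exists tau, valid S (exec (init_cfg V) sq) tau /\ exists q d, q \notin S /\
    decision A (ls (exec (exec (init_cfg V) sq) tau) q) = Some d.
Proof.
move=> hv HKS HSf; have [p0 hp0] := exists_out (leq_ltn_trans HSf Hfn).
have [om [Happ Hcr Hlive Hfair [Hpre _]]] := @build V K S (fun _ => True) sq p0 hp0 hv I
  (fun C p a _ _ ha => ex_intro _ [::] (And3 I ha I)).
have [T I _ _] := run_props Happ Hcr Hlive Hfair HKS HSf.
have [t [d hd]] := T _ hp0.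
pose t' := maxn t (size sq).
have hd' := I _ _ t' _ (leq_maxl _ _) hd.
have e : t' = size sq + (t' - size sq) by rewrite subnKC // leq_maxr.
have e0 : exec (init_cfg V) sq = cfo V om (size sq) by rewrite Hpre // take_size.
exists (mkseq (fun i => om (size sq + i)) (t' - size sq)); split.
  rewrite e0; apply: valid_seg => // i /andP [h1 _].
  by have := Hcr i; rewrite ltnNge h1.
exists p0, d; split=> //.
by rewrite e0 -cfo_exec -e.
Qed.

Definition reachable C := exists V sq, valid K (init_cfg V) sq /\ C = exec (init_cfg V) sq.

Lemma reach_term C (S : {set 'I_n}) : reachable C -> K \subset S -> #|S| <= f ->
  exists tau, valid S C tau /\ exists q d, q \notin S /\ decision A (ls (exec C tau) q) = Some d.
Proof. by move=> [V [sq [hv ->]]]; apply: term_crash. Qed.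

Lemma reachable_ext C tau : reachable C -> valid K C tau -> reachable (exec C tau).
Proof.
move=> [V [sq [hv ->]]] ht; exists V, (sq ++ tau); split; last by rewrite exec_cat.
by apply/valid_cat.
Qed.

Lemma reach_irrev C tau p d : reachable C -> valid K C tau ->
  decision A (ls C p) = Some d -> decision A (ls (exec C tau) p) = Some d.
Proof.
move=> [V [sq [hv ->]]] ht.
have hv' : valid K (init_cfg V) (sq ++ tau) by apply/valid_cat.
have [I _ _] := fin_facts hv'.
have := I (size sq) (size (sq ++ tau)) p d; rewrite take_size take_size_cat //.
by rewrite exec_cat; apply; rewrite ?size_cat ?leq_addr.
Qed.

Lemma reach_agree C tau p q d1 d2 : reachable C -> valid K C tau ->
  decision A (ls C p) = Some d1 -> decision A (ls (exec C tau) q) = Some d2 -> d1 = d2.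
Proof.
move=> [V [sq [hv ->]]] ht.
have hv' : valid K (init_cfg V) (sq ++ tau) by apply/valid_cat.
have [_ Ag _] := fin_facts hv'.
have := Ag (size sq) (size (sq ++ tau)) p q d1 d2; rewrite take_size take_size_cat //.
by rewrite exec_cat; apply; rewrite ?size_cat ?leq_addr.
Qed.


Definition reach C d := exists tau, valid K C tau /\ exists q, decision A (ls (exec C tau) q) = Some d.
Definition biv C := reach C true /\ reach C false.
Definition GoodF C := reachable C /\ biv C.

Lemma hKf : #|K| <= f. Proof. by rewrite card_K ltnW. Qed.

Lemma reach_some C : reachable C -> exists d, reach C d.
Proof.
move=> hr; have [tau [v [q [d [_ hd]]]]] := reach_term hr (subxx K) hKf.
by exists d, tau; split=> //; exists q.
Qed.

Lemma biv_of C d : reach C d -> reach C (~~ d) -> biv C.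
Proof. by case: d => h1 h2; split. Qed.

Lemma card_Kp (p : 'I_n) : #|K :|: [set p]| <= f.
Proof.
rewrite cardsU cards1 card_K; apply: leq_trans (leq_subr _ _) _; by rewrite addn1.
Qed.

Lemma flp_ext C p a : GoodF C -> p \notin K -> appl C p a ->
  exists sq, [/\ valid K C sq, appl (exec C sq) p a & GoodF (apply (exec C sq) p a)].
Proof.
move=> [hr hb] hp ha.
have rext sq : valid K C sq -> appl (exec C sq) p a -> reachable (apply (exec C sq) p a).
  move=> v ap; rewrite -[apply _ p a]/(apply (exec C sq) (p, a).1 (p, a).2) -exec_rcons.
  by apply: reachable_ext hr _; apply/valid_rcons.
case: (pselect (exists sq, [/\ valid K C sq, appl (exec C sq) p a & biv (apply (exec C sq) p a)]))
  => [[sq [h1 h2 h3]]|H].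
  by exists sq; split=> //; split=> //; apply: rext.
exfalso.
have Drch sq : valid K C sq -> (p, a) \notin sq ->
  [/\ appl (exec C sq) p a, reachable (apply (exec C sq) p a) & ~ biv (apply (exec C sq) p a)].
  move=> v ni; have ap := appl_exec ha v ni; split=> //; first exact: rext.
  by move=> hb'; apply: H; exists sq.
have step1 d : reach C d -> exists sq, [/\ valid K C sq, (p, a) \notin sq &
    reach (apply (exec C sq) p a) d].
  case=> rho [hv [q hq]]; case: (boolP ((p, a) \in rho)) => hin.
    pose i := index (p, a) rho.
    have erho : rho = take i rho ++ (p, a) :: drop i.+1 rho.
      by rewrite -{1}(cat_take_drop i rho) (drop_nth (p, a)) ?index_mem // nth_index.
    move: hv; rewrite {1}erho => /valid_cat [v1 [_ _ v2]].
    exists (take i rho); split=> //; first by rewrite in_take // ltnn.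
    exists (drop i.+1 rho); split=> //; exists q.
    by move: hq; rewrite {1}erho exec_cat.
  exists rho; split=> //; exists [::]; split=> //; exists q => /=.
  have hv1 : valid K (exec C rho) [:: (p, a)] by split=> //; apply: appl_exec ha hv hin.
  by apply: (reach_irrev (tau := [:: (p, a)])) hq => //; apply: reachable_ext.
have [_ hr0 _] := Drch [::] I (negbT (in_nil _)).
have [d0 hd0] := reach_some hr0.
have hCn : reach C (~~ d0) by case: d0 {hd0}; case: hb.
have [s1 [v1 n1 r1]] := step1 _ hCn.
pose P i := reach (apply (exec C (take i s1)) p a) d0.
have P0 : P 0 by rewrite /P take0.
have Pn : ~ P (size s1).
  rewrite /P take_size => h; have [_ _ nb] := Drch _ v1 n1; apply: nb.
  exact: biv_of h r1.
have [i [hi Pi nPi]] := ivt P0 Pn.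
rewrite /P in Pi nPi.
have vtake j : valid K C (take j s1) by move: v1; rewrite -{1}(cat_take_drop j s1) => /valid_cat [h _].
have ni j : (p, a) \notin take j s1 by apply: contra n1; apply: mem_take.
pose e' := nth (p, a) s1 i.
have ht : take i.+1 s1 = rcons (take i s1) e' by rewrite (take_nth (p, a)).
have [_ [ha' hk']] : valid K C (take i s1) /\
    [/\ appl (exec C (take i s1)) e'.1 e'.2 & e'.1 \notin K].
  by apply/valid_rcons; rewrite -ht.
have ne' : (p, a) != e' by apply: contraNneq n1 => ->; apply: mem_nth.
pose C0 := exec C (take i s1).
have [a0 hr0' nb0] := Drch _ (vtake i) (ni i).
have [_ _ nb1] := Drch _ (vtake i.+1) (ni i.+1).
rewrite ht exec_rcons -/C0 in nb1 nPi.
rewrite -/C0 in a0 nb0 Pi ha'.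
have u0 : ~ reach (apply C0 p a) (~~ d0) by move=> h; apply: nb0; exact: biv_of Pi h.
have r1' : reach (apply (apply C0 e'.1 e'.2) p a) (~~ d0).
  have [ap1 _ _] := Drch _ (vtake i.+1) (ni i.+1).
  have hX1 := rext _ (vtake i.+1) ap1.
  rewrite ht exec_rcons -/C0 in hX1.
  have [d hd] := reach_some hX1.
  case: (eqVneq d d0) => [e|ne]; first by rewrite e in hd; case: (nPi hd).
  suff <- : d = ~~ d0 by [].
  by move: ne; case: (d); case: (d0).
have hrC0 : reachable C0 by apply: reachable_ext hr (vtake i).
case: (eqVneq e'.1 p) => [ep|np].
- pose S := K :|: [set p].
  have pS : p \in S by rewrite !inE eqxx orbT.
  have KS : K \subset S := subsetUl _ _.
  have [tau [vt [q [d [hq hd]]]]] := reach_term hrC0 KS (card_Kp p).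
  have nqp : q != p by apply: contraNneq hq => ->.
  have [vX0 _ eX0] := exec_comm vt pS a0.
  have rX0 : reach (apply C0 p a) d.
    exists tau; split; first exact: valid_sub KS vX0.
    by exists q; rewrite eX0 ls_apply.
  have dd0 : d = d0.
    case: (eqVneq d d0) => // ne; case: u0; suff <- : d = ~~ d0 by [].
    by move: ne; case: (d); case: (d0).
  have ha'' : appl C0 p e'.2 by rewrite -ep.
  have [vY _ eY] := exec_comm vt pS ha''.
  have apYa : appl (apply C0 p e'.2) p a.
    apply: appl_apply => //; apply: contraNneq ne' => [[e2]].
    by rewrite /e' (surjective_pairing (nth _ _ _)) -/e' ep e2.
  have [vX1 _ eX1] := exec_comm vY pS apYa.
  apply: nPi; exists tau; split; first by rewrite ep; exact: valid_sub KS vX1.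
  by exists q; rewrite ep eX1 ls_apply // eY ls_apply // -dd0.
- have X1e : apply (apply C0 e'.1 e'.2) p a = apply (apply C0 p a) e'.1 e'.2.
    by rewrite apply_comm.
  rewrite X1e in r1'; apply: u0; case: r1' => tau [vt [q hq]].
  exists (e' :: tau); split; last by exists q.
  split=> //; apply: appl_apply => //.
Qed.

Definition Vi (i : nat) : ivec n := fun p => i <= p.

Lemma val_init V sq p d : valid K (init_cfg V) sq ->
  decision A (ls (exec (init_cfg V) sq) p) = Some d -> kTAg_prob n (Fp (size sq) K K) V d.
Proof. by move=> hv; have [_ _ Vd] := fin_facts hv; apply: Vd. Qed.

Lemma biv_init : exists V, biv (init_cfg V).
Proof.
case: (pselect (exists V, biv (init_cfg V))) => // H; exfalso.
have rinit V : reachable (init_cfg V) by exists V, [::].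
have F0 : Faulty (Fp 0 K K) = K by apply: Faulty_Fp.
have vt d : reach (init_cfg (Vi 0)) d -> d = true.
  case=> tau [v [q hq]]; have := val_init v hq; rewrite /kTAg_prob.
  have e : [set p | ~~ Vi 0 p] = set0 by apply/setP => p; rewrite !inE.
  rewrite e cards0 leqn0; case: ifP => [/eqP n0|_]; first by move: Hfn; rewrite n0.
  rewrite Faulty_Fp ?card_K; last exact: subxx.
  have -> : [forall p, Vi 0 p] by apply/forallP.
  have -> : k <= n - 1 by move: Hkf Hfn; clear; lia.
  by move=> /eqP.
have vf d : reach (init_cfg (Vi n)) d -> d = false.
  case=> tau [v [q hq]]; have := val_init v hq; rewrite /kTAg_prob.
  have e : [set p | ~~ Vi n p] = setT by apply/setP => p; rewrite !inE /Vi -ltnNge ltn_ord.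
  by rewrite e cardsT card_ord leqnn => /eqP.
pose P i := reach (init_cfg (Vi i)) true.
have P0 : P 0 by have [d hd] := reach_some (rinit (Vi 0)); rewrite /P -(vt _ hd).
have Pn : ~ P n by move/vf.
have [i [hi Pi nPi]] := ivt P0 Pn.
have nf : ~ reach (init_cfg (Vi i)) false by move=> h; apply: H; exists (Vi i); split.
pose j : 'I_n := Ordinal hi.
pose S := K :|: [set j].
have jS : j \in S by rewrite !inE eqxx orbT.
have KS : K \subset S := subsetUl _ _.
have [tau [vt' [q [d [hq hd]]]]] := reach_term (rinit (Vi i)) KS (card_Kp j).
have dt : d = true.
  case: d hd => // hd; case: nf; exists tau; split; first exact: valid_sub KS vt'.
  by exists q.
have nqj : q != j by apply: contraNneq hq => ->; rewrite !inE eqxx orbT.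
have ei : init_cfg (Vi i.+1) = upd_ls (init_cfg (Vi i)) j (init A j (Vi i.+1 j)).
  rewrite /init_cfg /upd_ls; congr Cfg; apply: funext => p /=.
  case: (eqVneq p j) => [->|npj] //; congr (init A p _).
  rewrite /Vi; apply/idP/idP => h; first exact: ltnW.
  rewrite ltn_neqAle h andbT; apply: contraNneq npj => e.
  by apply/eqP; apply: val_inj; rewrite /= e.
have [v2 e2] := exec_upd (init A j (Vi i.+1 j)) vt' jS.
apply: nPi; exists tau; split; first by rewrite ei; exact: valid_sub KS v2.
by exists q; rewrite ei e2 /= (negbTE nqj) hd dt.
Qed.

Lemma not_solves : False.
Proof.
have [V hb] := biv_init.
have [p0 hp0] := K_out.
have g0 : GoodF (exec (init_cfg V) [::]) by split=> //; exists V, [::].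
have [om [Happ Hcr Hlive Hfair [_ Hgood]]] :=
  @build V K K GoodF [::] p0 hp0 I g0 flp_ext.
have Hcr' : forall t, (om t).1 \notin (if t < 0 then K else K) by move=> t; apply: Hcr.
have [T I _ _] := @run_props V om 0 K Happ Hcr' Hlive Hfair (subxx K) hKf.
have [t [d hd]] := T _ hp0.
have [t' [le [hr' hb']]] := Hgood t.
have hd' := I _ _ _ _ le hd.
have [tau [vt [q hq]]] : reach (cfo V om t') (~~ d) by case: d {hd hd'}; case: hb'.
have := reach_agree hr' vt hd' hq; by case: d {hd hd' hq}.
Qed.

End FLP.
End Model.

Lemma adm_weaken n (A : algorithm n) V (R : run A) T F :
  admissible V R T true F -> admissible V R T false F.
Proof.
move=> [a [b [c [d [e [g [h [i _]]]]]]]].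
by do 8!(split; first by []).
Qed.

Theorem mainTheorem11 : forall k f n : nat,
  1 <= k <= f - 1 -> f <= n - 1 ->
  ~ cC_reducible (ConsT n f) (kTAg n k f) /\ ~ C_reducible (ConsT n f) (kTAg n k f).
Proof.
move=> k f n /andP [h1 h2] h3.
have hkf : k < f by move: h1 h2; clear; lia.
have hfn : f < n by move: h1 h2 h3; clear; lia.
split.
  by case=> A Hs; apply: (not_solves h1 hkf hfn Hs).
case=> A Hs; apply: (not_solves (A := A) h1 hkf hfn).
move=> F nd hc V R adm; exact: (Hs F nd hc V R (adm_weaken adm)).
Qed.
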